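(* Let $G$ and $H$ be finite, simple, connected graphs, each of order at least $2$. The direct product $G \times H$ is well-dominated if and only if $G\times H$ is isomorphic to $K_3\times K_3$, or $G\times H$ is isomorphic to $K_2\times C_4$, or $G \times H$ is isomorphic to $K_2 \times (F \odot K_1)$ for some connected graph $F$.
   Context: A set $D$ of vertices of a graph is dominating if every vertex is in $D$ or adjacent to a vertex of $D$. A graph is well-dominated if every minimal (with respect to inclusion) dominating set is a minimum dominating set, i.e. $\gamma(G)=\Gamma(G)$, where $\gamma$ and $\Gamma$ denote the smallest and largest cardinality of a minimal dominating set. The direct product $G\times H$ has vertex set $V(G)\times V(H)$, with $(g_1,h_1)$ adjacent to $(g_2,h_2)$ iff $g_1g_2\in E(G)$ and $h_1h_2\in E(H)$. The corona $F\odot K_1$ is obtained from $F$ by adding, for each vertex $u$ of $F$, a new vertex $u'$ and the edge $uu'$. The paper's standing assumption is that all graphs are finite, undirected, simple and of order at least $2$. *)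

(* Defs.v *)
From mathcomp Require Import all_boot.
Set Implicit Arguments. Unset Strict Implicit. Unset Printing Implicit Defensive.

Record sgraph := SGraph {
  vertex : finType;
  adj : rel vertex;
  adj_sym : symmetric adj;
  adj_irr : irreflexive adj }.

Definition gorder (G : sgraph) : nat := #|vertex G|.

Definition connected (G : sgraph) : Prop :=
  forall x y : vertex G, connect (@adj G) x y.

Definition dominating (G : sgraph) (D : {set vertex G}) : bool :=
  [forall v, (v \in D) || [exists u in D, adj u v]].

Definition minimal_dominating (G : sgraph) (D : {set vertex G}) : bool :=
  minset (@dominating G) D.

Definition well_dominated (G : sgraph) : Prop :=
  forall D : {set vertex G}, minimal_dominating D ->
    forall D' : {set vertex G}, dominating D' -> #|D| <= #|D'|.

Definition isomorphic (G H : sgraph) : Prop :=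
  exists f : vertex G -> vertex H,
    bijective f /\ forall x y, adj (f x) (f y) = adj x y.

Definition dprod_adj (G H : sgraph) : rel (vertex G * vertex H) :=
  fun p q => adj p.1 q.1 && adj p.2 q.2.

Lemma dprod_sym G H : symmetric (@dprod_adj G H).
Proof. by move=> p q; rewrite /dprod_adj !(adj_sym _ p.1) (adj_sym _ p.2). Qed.

Lemma dprod_irr G H : irreflexive (@dprod_adj G H).
Proof. by move=> p; rewrite /dprod_adj adj_irr. Qed.

Definition dprod_graph (G H : sgraph) : sgraph :=
  SGraph (@dprod_sym G H) (@dprod_irr G H).

Definition K_adj n : rel 'I_n := fun i j => i != j.
Lemma K_sym n : symmetric (@K_adj n).
Proof. by move=> i j; rewrite /K_adj eq_sym. Qed.
Lemma K_irr n : irreflexive (@K_adj n).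
Proof. by move=> i; rewrite /K_adj eqxx. Qed.
Definition K n : sgraph := SGraph (@K_sym n) (@K_irr n).

(* cycle C_n (meaningful for n >= 3): i ~ j iff j = i+1 or i = j+1 mod n *)
Definition C_adj n : rel 'I_n :=
  fun i j => (j == (i.+1 %% n) :> nat) || (i == (j.+1 %% n) :> nat).
Lemma C_sym n : symmetric (@C_adj n).
Proof. by move=> i j; rewrite /C_adj orbC. Qed.
Lemma C4_irr : irreflexive (@C_adj 4).
Proof. by case=> [[|[|[|[|?]]]] ?]. Qed.
Definition C4 : sgraph := SGraph (@C_sym 4) C4_irr.

(* corona F ⊙ K_1: inl u is the original vertex u, inr u is its pendant u' *)
Definition corona_adj (F : sgraph) : rel (vertex F + vertex F) :=
  fun x y => match x, y with
  | inl a, inl b => adj a b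
  | inl a, inr b => a == b
  | inr a, inl b => a == b
  | inr _, inr _ => false
  end.
Lemma corona_sym F : symmetric (@corona_adj F).
Proof. by move=> [a|a] [b|b] //=; rewrite ?(adj_sym _ a) // eq_sym. Qed.
Lemma corona_irr F : irreflexive (@corona_adj F).
Proof. by move=> [a|a] //=; rewrite adj_irr. Qed.
Definition corona (F : sgraph) : sgraph := SGraph (@corona_sym F) (@corona_irr F).

(* Main.v *)
Require Import Defs.
From mathcomp Require Import all_boot.
From mathcomp Require Import zify.
Set Implicit Arguments. Unset Strict Implicit. Unset Printing Implicit Defensive.

Lemma domP (X : sgraph) (D : {set vertex X}) :
  reflect (forall v, v \in D \/ exists2 u, u \in D & adj u v) (dominating D).
Proof.
apply: (iffP forallP) => H v.
  by case/orP: (H v) => [->|/existsP[u /andP[uD uv]]]; [left|right; exists u].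
case: (H v) => [->//|[u uD uv]]; apply/orP; right; apply/existsP; exists u.
by rewrite uD.
Qed.

Lemma minP (X : sgraph) (D : {set vertex X}) :
  reflect (dominating D /\ forall B, dominating B -> B \subset D -> B = D)
          (minimal_dominating D).
Proof. exact: minsetP. Qed.
Arguments domP {X D}.
Arguments minP {X D}.

Lemma indep_min (X : sgraph) (D : {set vertex X}) :
  (forall u v, u \in D -> v \in D -> ~~ adj u v) -> dominating D ->
  minimal_dominating D.
Proof.
move=> ind dom; apply/minP; split=> // B domB sBD.
apply/eqP; rewrite eqEsubset sBD /=; apply/subsetP => x xD.
have [//|[u uB ux]] := (elimT domP domB) x.
by move: (ind u x (subsetP sBD u uB) xD); rewrite ux.
Qed.

Lemma iso_refl (G : sgraph) : isomorphic G G.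
Proof. by exists id; split=> //; exists id. Qed.

Lemma iso_sym (G H : sgraph) : isomorphic G H -> isomorphic H G.
Proof.
case=> f [[g fg gf] fadj]; exists g; split; first by exists f.
by move=> x y; rewrite -fadj !gf.
Qed.

Lemma iso_trans (G H K : sgraph) :
  isomorphic G H -> isomorphic H K -> isomorphic G K.
Proof.
case=> f [bf fa] [g [bg ga]]; exists (g \o f); split; first exact: bij_comp.
by move=> x y /=; rewrite ga fa.
Qed.

Lemma iso_prod (G G' H H' : sgraph) :
  isomorphic G G' -> isomorphic H H' ->
  isomorphic (dprod_graph G H) (dprod_graph G' H').
Proof.
case=> f [[f' f1 f2] fa] [g [[g' g1 g2] ga]].
exists (fun p : vertex G * vertex H => (f p.1, g p.2)); split.
  exists (fun p : vertex G' * vertex H' => (f' p.1, g' p.2)).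
    by case=> a b /=; rewrite f1 g1.
  by case=> a b /=; rewrite f2 g2.
by case=> a b [c d]; rewrite /= /dprod_adj /= fa ga.
Qed.

Lemma iso_swap (G H : sgraph) :
  isomorphic (dprod_graph G H) (dprod_graph H G).
Proof.
exists (fun p : vertex G * vertex H => (p.2, p.1)); split.
  by exists (fun p : vertex H * vertex G => (p.2, p.1)); case.
by case=> a b [c d]; rewrite /= /dprod_adj /= andbC.
Qed.

Lemma wd_iso (G H : sgraph) : isomorphic G H -> well_dominated G -> well_dominated H.
Proof.
case=> f [[g fg gf] fa] wd D minD D' domD'.
have domE : forall E : {set vertex H}, dominating E = dominating (f @^-1: E).
  move=> E; apply/domP/domP => dE v.
    case: (dE (f v)) => [fv|[u uE uv]]; [by left; rewrite inE|right].
    by exists (g u); [rewrite inE gf | rewrite -fa gf].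
  case: (dE (g v)) => [gv|[u uE uv]]; [by left; rewrite inE gf in gv|right].
  by exists (f u); [rewrite inE in uE | rewrite -(gf v) fa].
have cardE : forall E : {set vertex H}, #|f @^-1: E| = #|E|.
  move=> E; have -> : f @^-1: E = g @: E.
    apply/setP=> x; rewrite inE; apply/idP/imsetP => [fx|[y yE ->]].
      by exists (f x); rewrite ?fg.
    by rewrite gf.
  by apply: card_imset; apply: (can_inj gf).
rewrite -cardE -(cardE D'); apply: wd; last by rewrite -domE.
case/minP: minD => dD mD; apply/minP; split; first by rewrite -domE.
move=> B dB sB.
have fB : f @^-1: (g @^-1: B) = B.
  by apply/setP=> x; rewrite !inE fg.
have := mD (g @^-1: B); rewrite domE fB => /(_ dB).
have sB' : g @^-1: B \subset D.
  by apply/subsetP=> x; rewrite inE => /(subsetP sB); rewrite inE gf.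
by move/(_ sB') => <-.
Qed.
Lemma rook_wd (X : sgraph) (C K : finType) (comp : vertex X -> C) (r c : vertex X -> K) :
  (forall w v, (w == v) || adj w v = (comp w == comp v) && ((r w == r v) || (c w == c v))) ->
  (forall k k1 k2, exists v, [&& comp v == k, r v == k1 & c v == k2]) ->
  well_dominated X.
Proof.
move=> hd hs.
have domE : forall D : {set vertex X}, dominating D -> forall v,
    exists2 u, u \in D & (comp u == comp v) && ((r u == r v) || (c u == c v)).
  move=> D /domP dD v; case: (dD v) => [vD|[u uD uv]].
    by exists v => //; rewrite !eqxx.
  by exists u => //; rewrite -hd uv orbT.
pose rowcov (D : {set vertex X}) (k : C) :=
  [forall k1, [exists u in D, (comp u == k) && (r u == k1)]].
pose colcov (D : {set vertex X}) (k : C) :=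
  [forall k1, [exists u in D, (comp u == k) && (c u == k1)]].
have cov : forall D, dominating D -> forall k, rowcov D k || colcov D k.
  move=> D dD k; apply/negPn/negP; rewrite negb_or.
  case/andP=> /forallPn[k1 /existsPn h1] /forallPn[k2 /existsPn h2].
  have [v /and3P[/eqP vk /eqP v1 /eqP v2]] := hs k k1 k2.
  have [u uD /andP[cu ru]] := domE D dD v.
  case/orP: ru => [/eqP ru|/eqP cu'].
    by move: (h1 u); rewrite uD (eqP cu) vk ru v1 !eqxx.
  by move: (h2 u); rewrite uD (eqP cu) vk cu' v2 !eqxx.
pose f (D : {set vertex X}) (w : vertex X) :=
  (comp w, if rowcov D (comp w) then r w else c w).
have hit : forall D, dominating D -> forall k k1, exists2 u, u \in D & f D u == (k, k1).
  move=> D dD k k1; case h: (rowcov D k).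
    have /existsP[u /andP[uD /andP[/eqP uk /eqP u1]]] := forallP h k1.
    by exists u => //; rewrite /f uk h u1.
  have := cov D dD k; rewrite h /= => h'.
  have /existsP[u /andP[uD /andP[/eqP uk /eqP u1]]] := forallP h' k1.
  by exists u => //; rewrite /f uk h u1.
move=> D /minP[dD mD] D' dD'.
apply: (@leq_trans #|[set: C * K]|); last first.
  apply: leq_trans (leq_imset_card (f D') D').
  apply: subset_leq_card; apply/subsetP => -[k k1] _.
  have [u uD /eqP fu] := hit D' dD' k k1.
  by apply/imsetP; exists u.
pose rep (x : C * K) := [pick w in D | f D w == x].
pose E := [set w in D | rep (f D w) == Some w].
have sED : E \subset D by apply/subsetP=> w; rewrite inE => /andP[].
have dE : dominating E.
  apply/domP => v.
  have [u uD fu] := hit D dD (comp v) (if rowcov D (comp v) then r v else c v).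
  have [w Hr] : exists w, rep (f D v) = Some w.
    rewrite /rep; case: pickP => [w _|none]; first by exists w.
    by move: (none u); rewrite uD fu.
  have := Hr; rewrite /rep; case: pickP => [w' /andP[wD /eqP fw] [ew] | _ //]; subst w'.
  have wE : w \in E by rewrite inE wD /= fw Hr.
  have : (w == v) || adj w v.
    move: fw; rewrite /f => -[e1]; rewrite hd e1 eqxx /=.
    by case: (rowcov D (comp v)) => ->; rewrite eqxx ?orbT.
  case/orP => [/eqP <-|wv]; [by left | by right; exists w].
have ED := mD E dE sED.
rewrite -ED -(card_in_imset (f := f D)); first exact/subset_leq_card/subsetT.
move=> w1 w2; rewrite !inE => /andP[_ /eqP h1] /andP[_ /eqP h2] e.
by move: h1; rewrite e h2 => -[].
Qed.

Lemma wd_K3K3 : well_dominated (dprod_graph (K 3) (K 3)).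
Proof.
apply: (@rook_wd (dprod_graph (K 3) (K 3)) unit 'I_3 (fun _ => tt)
  (fun w : 'I_3 * 'I_3 => Ordinal (ltn_pmod (w.1 + 2 * w.2) (isT : 0 < 3)))
  (fun w : 'I_3 * 'I_3 => Ordinal (ltn_pmod (w.1 + w.2) (isT : 0 < 3)))).
  move=> w v; case: w => [[[|[|[|?]]] ?] [[|[|[|?]]] ?]];
    case: v => [[[|[|[|?]]] ?] [[|[|[|?]]] ?]] => //.
move=> [] k1 k2.
exists (Ordinal (ltn_pmod (2 * (k1 + k2)) (isT : 0 < 3)),
        Ordinal (ltn_pmod (2 * k2 + k1) (isT : 0 < 3))).
by case: k1 => [[|[|[|?]]] ?]; case: k2 => [[|[|[|?]]] ?].
Qed.

Lemma wd_K2C4 : well_dominated (dprod_graph (K 2) C4).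
Proof.
apply: (@rook_wd (dprod_graph (K 2) C4) 'I_2 'I_2
  (fun w : 'I_2 * 'I_4 => Ordinal (ltn_pmod (w.1 + w.2) (isT : 0 < 2)))
  (fun w : 'I_2 * 'I_4 => Ordinal (ltn_pmod (w.2 %/ 2) (isT : 0 < 2)))
  (fun w : 'I_2 * 'I_4 => Ordinal (ltn_pmod (w.1 + w.2 %/ 2) (isT : 0 < 2)))).
  move=> w v; case: w => [[[|[|?]] ?] [[|[|[|[|?]]]] ?]];
    case: v => [[[|[|?]] ?] [[|[|[|[|?]]]] ?]] => //.
move=> k k1 k2.
exists (Ordinal (ltn_pmod (k1 + k2) (isT : 0 < 2)),
        Ordinal (ltn_pmod (2 * k1 + (k + k1 + k2) %% 2) (isT : 0 < 4))).
by case: k => [[|[|?]] ?]; case: k1 => [[|[|?]] ?]; case: k2 => [[|[|?]] ?].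
Qed.

Definition o0 : 'I_2 := Ordinal (isT : 0 < 2).
Definition o1 : 'I_2 := Ordinal (isT : 1 < 2).
Definition flip (i : 'I_2) : 'I_2 := if i == o0 then o1 else o0.

Lemma I2_cases (i : 'I_2) : i = o0 \/ i = o1.
Proof. by case: i => [[|[|?]] Hi]; [left; apply/val_inj | right; apply/val_inj | ]. Qed.

Lemma flipK : involutive flip.
Proof. by move=> i; case: (I2_cases i) => ->. Qed.

Lemma neq_flip (i j : 'I_2) : (i != j) = (j == flip i).
Proof. by case: (I2_cases i) => ->; case: (I2_cases j) => ->. Qed.

Lemma leaf_drop (X : sgraph) (D : {set vertex X}) (c l : vertex X) :
  dominating D -> c \in D -> adj c l -> (forall z, adj l z -> z = c) ->
  dominating (D :\ l).
Proof.
move=> /domP dD cD cl lN; apply/domP => v.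
have cl' : c != l by apply: contraTneq cl => ->; rewrite adj_irr.
case: (eqVneq v l) => [->|vl]; first by right; exists c; rewrite // !inE cl'.
case: (dD v) => [vD|[u uD uv]]; first by left; rewrite !inE vl.
case: (eqVneq u l) => [ul|ul]; last by right; exists u; rewrite // !inE ul.
by subst u; left; rewrite (lN v uv) !inE cl'.
Qed.

Lemma wd_corona (F : sgraph) : well_dominated (dprod_graph (K 2) (corona F)).
Proof.
pose key (w : 'I_2 * (vertex F + vertex F)) : 'I_2 * vertex F :=
  match w.2 with inl u => (w.1, u) | inr u => (flip w.1, u) end.
have leafN : forall j u (z : 'I_2 * (vertex F + vertex F)),
    @adj (dprod_graph (K 2) (corona F)) (j, inr u) z -> z = (flip j, inl u).
  move=> j u [k [t|t]] /andP[/= jk]; rewrite /= in jk * => // /eqP ut.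
  by move: jk; rewrite /K_adj neq_flip => /eqP ->; rewrite ut.
have cl : forall j u, @adj (dprod_graph (K 2) (corona F)) (flip j, inl u) (j, inr u).
  by move=> j u; rewrite /= /dprod_adj /= /K_adj eq_sym neq_flip eqxx /=.
move=> D /minP[dD mD] D' dD'.
apply: (@leq_trans #|[set: 'I_2 * vertex F]|); last first.
  apply: leq_trans (leq_imset_card key D').
  apply: subset_leq_card; apply/subsetP => -[i u] _.
  move/domP: dD' => /(_ (flip i, inr u)) [lD|[z zD zl]].
    by apply/imsetP; exists (flip i, inr u) => //; rewrite /key /= flipK.
  rewrite adj_sym in zl; have ez := leafN _ _ _ zl; rewrite flipK in ez.
  by apply/imsetP; exists z => //; rewrite ez.
rewrite -(card_in_imset (f := key)); first exact/subset_leq_card/subsetT.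
have nodbl : forall j u, (flip j, inl u) \in D -> (j, inr u) \in D -> False.
  move=> j u cD lD.
  have := mD _ (leaf_drop dD cD (cl j u) (leafN j u)) (subD1set _ _).
  by move/setP/(_ (j, inr u)); rewrite !inE eqxx lD.
move=> [i1 [u1|u1]] [i2 [u2|u2]] w1D w2D; rewrite /key /=.
- by case=> -> ->.
- case=> e1 e2; subst i1 u2; case: (nodbl _ _ w1D w2D).
- case=> e1 e2; subst i2 u2; case: (nodbl _ _ w2D w1D).
- by case=> /(congr1 flip); rewrite !flipK => -> ->.
Qed.

Lemma conn_closed (X : sgraph) (S : {set vertex X}) x :
  connected X -> x \in S -> (forall u w, u \in S -> adj u w -> w \in S) ->
  forall y, y \in S.
Proof.
move=> cX xS cl y; case/connectP: (cX x y) => p pth ->.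
elim: p x xS pth => //= z p IH x xS /andP[xz pth].
exact: IH (cl _ _ xS xz) pth.
Qed.

Lemma exists_other (T : finType) (A : {set T}) : #|A| < #|T| -> exists z, z \notin A.
Proof.
move=> h; case: (boolP [exists z, z \notin A]) => [/existsP //|/existsPn H].
have : [set: T] \subset A by apply/subsetP => z _; move: (H z); rewrite negbK.
by move/subset_leq_card; rewrite cardsT leqNgt h.
Qed.

Lemma noiso (X : sgraph) : connected X -> 1 < #|vertex X| ->
  forall y : vertex X, exists t, adj y t.
Proof.
move=> cX h y; have [z] : exists z, z \notin [set y] by apply: exists_other; rewrite cards1.
rewrite inE => zy; case/connectP: (cX y z) => -[|t p] /=.
  by move=> _ e; rewrite e eqxx in zy.
by case/andP=> yt _ _; exists t.
Qed.

Lemma complete_iso (X : sgraph) n : #|vertex X| = n ->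
  (forall a b : vertex X, a != b -> adj a b) -> isomorphic (K n) X.
Proof.
move=> e comp.
exists (fun i : 'I_n => enum_val (cast_ord (esym e) i)); split.
  exists (fun x => cast_ord e (enum_rank x)).
    by move=> i; rewrite enum_valK cast_ordKV.
  by move=> x; rewrite cast_ordK enum_rankK.
move=> i j; rewrite /= /K_adj.
case: (eqVneq i j) => [->|ij]; first by rewrite adj_irr.
by apply: comp; apply: contra ij => /eqP /enum_val_inj /cast_ord_inj ->.
Qed.

Lemma set3E (T : finType) (a b c : T) : [set a; b; c] = a |: (b |: [set c]).
Proof. by apply/setP => x; rewrite !inE orbA. Qed.

Lemma card3 (T : finType) (a b c : T) : #|[set a; b; c]| <= 3.
Proof.
rewrite set3E !cardsU1 cards1.
by case: (_ \notin _); case: (_ \notin _).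
Qed.

Lemma two_complete (X : sgraph) : connected X -> #|vertex X| = 2 ->
  forall a b : vertex X, a != b -> adj a b.
Proof.
move=> cX e a b ab.
have [t at'] := noiso cX (ltac:(by rewrite e)) a.
case: (eqVneq t b) => [<-//|tb].
have ta : t != a by apply: contraTneq at' => ->; rewrite adj_irr.
have := max_card [set t; a; b]; rewrite e set3E !cardsU1 cards1 !inE.
by rewrite (negbTE ta) (negbTE tb) (negbTE ab).
Qed.

Lemma good_vertex (X : sgraph) : connected X -> 2 < #|vertex X| ->
  exists v : vertex X, forall y, exists2 t, adj y t & t != v.
Proof.
move=> cX h; have ni := noiso cX (ltnW h).
suff : [exists v : vertex X, [forall y : vertex X, [exists t : vertex X, adj y t && (t != v)]]].
  case/existsP => v /forallP Hv; exists v => y.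
  by have /existsP[t /andP[yt tv]] := Hv y; exists t.
apply: contraT => /existsPn H.
have [v0 _] : exists v0 : vertex X, v0 \notin set0 by apply: exists_other; rewrite cards0 (leq_trans _ h).
have lf : forall v : vertex X, exists y : vertex X, forall t, adj y t -> t = v.
  move=> v; have /forallPn[y /existsPn Hy] := H v; exists y => t yt.
  by move: (Hy t); rewrite yt /= negbK => /eqP.
have [y0 h0] := lf v0; have [y1 h1] := lf y0.
have y0v0 : adj y0 v0 by have [t yt] := ni y0; rewrite -(h0 t yt).
have y1y0 : adj y1 y0 by have [t yt] := ni y1; rewrite -(h1 t yt).
have e1 : y1 = v0 by apply: h0; rewrite adj_sym.
subst y1.
have all2 := @conn_closed X [set v0; y0] v0 cX (ltac:(by rewrite !inE eqxx)).
have : [set: vertex X] \subset [set v0; y0].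
  apply/subsetP => z _; apply: all2.
  move=> u w; rewrite !inE => /orP[/eqP->|/eqP->] uw.
    by rewrite (h1 w uw) eqxx orbT.
  by rewrite (h0 w uw) eqxx.
move/subset_leq_card; rewrite cardsT cards2.
by case: (v0 != y0) => /=; rewrite leqNgt ?h ?(ltnW h).
Qed.

Definition indep (X : sgraph) (A : {set vertex X}) :=
  [forall u in A, forall w in A, ~~ adj u w].

Lemma indepP (X : sgraph) (A : {set vertex X}) :
  reflect (forall u w, u \in A -> w \in A -> ~~ adj u w) (indep A).
Proof.
apply: (iffP forallP) => [H u w uA wA|H u].
  by have /implyP/(_ uA)/forallP/(_ w)/implyP/(_ wA) := H u.
by apply/implyP => uA; apply/forallP => w; apply/implyP => wA; apply: H.
Qed.

Lemma maxind (X : sgraph) (C : {set vertex X}) : indep C ->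
  exists A : {set vertex X}, [/\ C \subset A, indep A &
    forall x, x \notin A -> exists2 a, a \in A & @adj X a x].
Proof.
move=> iC; have [A /maxsetP[iA mA] CA] := @maxset_exists _ (@indep X) C iC.
exists A; split => // x xA.
case: (boolP [exists a in A, adj a x]) => [/existsP[a /andP[aA ax]]|/existsPn na].
  by exists a.
have iB : indep (x |: A).
  apply/indepP => u w; rewrite !inE => /orP[/eqP->|uA] /orP[/eqP->|wA].
  - by rewrite adj_irr.
  - by move: (na w); rewrite wA /= adj_sym.
  - by move: (na u); rewrite uA.
  - by move/indepP: iA; apply.
have := mA _ iB (subsetUr _ _) => /setP /(_ x).
by rewrite !inE eqxx (negbTE xA).
Qed.

Lemma arith1 k : 1 < k -> 1 + (k - 2) <= k - 1.
Proof. lia. Qed.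
Lemma arith2 k km : 1 < k -> k + km <= km + (k - 1) -> false.
Proof. move=> *; exfalso; lia. Qed.

Lemma nb_clique (G H : sgraph) (v u0 : vertex H) :
  well_dominated (dprod_graph G H) ->
  (forall y : vertex H, exists2 t, adj y t & t != v) -> adj u0 v ->
  (forall x : vertex G, exists y, adj x y) ->
  forall x a1 a2 : vertex G, adj x a1 -> adj x a2 -> a1 != a2 -> adj a1 a2.
Proof.
move=> wd gv u0v niG x a1 a2 xa1 xa2 a12.
apply: contraT => na.
have iC : indep [set a1; a2].
  apply/indepP => p q; rewrite !inE => /orP[/eqP->|/eqP->] /orP[/eqP->|/eqP->];
    by rewrite ?adj_irr // adj_sym.
have [A [CA /indepP iA mA]] := maxind iC.
have a1A : a1 \in A by apply: (subsetP CA); rewrite !inE eqxx.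
have a2A : a2 \in A by apply: (subsetP CA); rewrite !inE eqxx orbT.
pose nb (a : vertex G) := odflt a [pick y | adj a y].
have nbP : forall a, adj a (nb a).
  move=> a; rewrite /nb; case: pickP => [y ay //|none].
  by have [y ay] := niG a; move: (none y); rewrite ay.
pose Cs := x |: (nb @: (A :\: [set a1; a2])).
pose D1 : {set vertex (dprod_graph G H)} := setX A [set: vertex H].
pose D2 : {set vertex (dprod_graph G H)} := setX A (~: [set v]) :|: setX Cs [set u0].
have min1 : minimal_dominating D1.
  apply: indep_min.
    move=> [p q] [p' q']; rewrite !inE /= => /andP[pA _] /andP[p'A _].
    by rewrite /= /dprod_adj /= (negbTE (iA p p' pA p'A)).
  apply/domP => -[p q]; case: (boolP (p \in A)) => pA; first by left; rewrite !inE pA.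
  right; have [a aA ap] := mA p pA; have [t qt _] := gv q.
  exists (a, t); first by rewrite !inE aA.
  by rewrite /= /dprod_adj /= ap adj_sym qt.
have dom2 : dominating D2.
  apply/domP => -[p q]; case: (boolP (p \in A)) => pA.
    case: (eqVneq q v) => [->|qv]; last by left; rewrite !inE pA /= qv.
    right; have [c cC cp] : exists2 c, c \in Cs & adj c p.
      case: (boolP (p \in [set a1; a2])) => pa.
        exists x; first by rewrite !inE eqxx.
        by move: pa; rewrite !inE => /orP[/eqP->|/eqP->].
      exists (nb p); last by rewrite adj_sym nbP.
      by rewrite !inE; apply/orP; right; apply/imsetP; exists p => //; rewrite in_setD pa pA.
    exists (c, u0); first by rewrite in_setU !in_setX /= cC in_set1 eqxx orbT.
    by rewrite /= /dprod_adj /= cp u0v.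
  right; have [a aA ap] := mA p pA; have [t qt tv] := gv q.
  exists (a, t); first by rewrite !inE aA /= tv.
  by rewrite /= /dprod_adj /= ap adj_sym qt.
have := wd _ min1 _ dom2.
have cD2 : #|D2| <= #|A| * (#|vertex H|).-1 + (#|A| - 1).
  rewrite cardsU; apply: leq_trans (leq_subr _ _) _.
  rewrite !cardsX cardsC1 cards1 muln1 leq_add2l /Cs.
  apply: leq_trans (_ : 1 + #|A :\: [set a1; a2]| <= _).
    rewrite cardsU1; apply: leq_add; first by case: (_ \notin _).
    exact: leq_imset_card.
  rewrite cardsD (setIidPr CA) cards2 a12.
  have : 1 < #|A|.
    by apply: leq_trans (subset_leq_card CA); rewrite cards2 a12.
  exact: arith1.
have m0 : 0 < #|vertex H| by apply/card_gt0P; exists v.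
have k2 : 1 < #|A| by apply: leq_trans (subset_leq_card CA); rewrite cards2 a12.
rewrite cardsX cardsT => h; have := leq_trans h cD2.
move: m0 k2; case: #|vertex H| => [//|m] _ /=.
rewrite mulnS; move: (#|A| * m) => km; exact: arith2.
Qed.

Lemma clique_complete (X : sgraph) : connected X ->
  (forall x a1 a2 : vertex X, adj x a1 -> adj x a2 -> a1 != a2 -> adj a1 a2) ->
  forall a b : vertex X, a != b -> adj a b.
Proof.
move=> cX cl a b ab.
pose S := [set z | (z == a) || adj a z].
have aS : a \in S by rewrite inE eqxx.
have cl' : forall u w, u \in S -> adj u w -> w \in S.
  move=> u w; rewrite /S !inE => /orP[/eqP->|au] uw; first by rewrite uw orbT.
  case: (eqVneq w a) => [->|wa] //=.
  by apply: (cl u) => //; [rewrite adj_sym | rewrite eq_sym].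
by have := @conn_closed X S a cX aS cl' b; rewrite /S inE eq_sym (negbTE ab).
Qed.

Lemma complete_bound (G H : sgraph) : well_dominated (dprod_graph G H) ->
  (forall a b : vertex G, a != b -> adj a b) ->
  (forall a b : vertex H, a != b -> adj a b) ->
  2 < #|vertex G| -> 2 < #|vertex H| -> #|vertex H| <= 3.
Proof.
move=> wd cG cH nG nH.
have [g1 _] : exists g : vertex G, g \notin set0.
  by apply: exists_other; rewrite cards0 (leq_trans _ nG).
have [g2 g2n] : exists g : vertex G, g \notin [set g1].
  by apply: exists_other; rewrite cards1 (leq_trans _ nG).
have [g3 g3n] : exists g : vertex G, g \notin [set g1; g2].
  by apply: exists_other; rewrite cards2; case: (_ != _) => //; apply: leq_trans nG.
have [h1 _] : exists g : vertex H, g \notin set0.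
  by apply: exists_other; rewrite cards0 (leq_trans _ nH).
have [h2 h2n] : exists g : vertex H, g \notin [set h1].
  by apply: exists_other; rewrite cards1 (leq_trans _ nH).
have [h3 h3n] : exists g : vertex H, g \notin [set h1; h2].
  by apply: exists_other; rewrite cards2; case: (_ != _) => //; apply: leq_trans nH.
move: g2n g3n h2n h3n; rewrite !inE !negb_or => g21 /andP[g31 g32] h21 /andP[h31 h32].
pose D1 : {set vertex (dprod_graph G H)} := setX [set g1] [set: vertex H].
pose D2 : {set vertex (dprod_graph G H)} := [set (g1, h1); (g2, h2); (g3, h3)].
have min1 : minimal_dominating D1.
  apply: indep_min.
    move=> [p q] [p' q']; rewrite !inE /= => /andP[/eqP-> _] /andP[/eqP-> _].
    by rewrite /= /dprod_adj /= adj_irr.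
  apply/domP => -[p q]; case: (eqVneq p g1) => [->|pg]; first by left; rewrite !inE eqxx.
  right; have [t tq] : exists t : vertex H, t \notin [set q].
    by apply: exists_other; rewrite cards1 (leq_trans _ nH).
  exists (g1, t); first by rewrite !inE eqxx.
  rewrite inE in tq.
  by rewrite /= /dprod_adj /= cG 1?eq_sym // cH.
have dom2 : dominating D2.
  apply/domP => -[p q]; right.
  have [i iD ip] : exists2 i, i \in D2 & (i.1 != p) && (i.2 != q).
    case: (boolP ((g1 != p) && (h1 != q))) => [h|n1]; first by exists (g1, h1); rewrite // !inE eqxx.
    case: (boolP ((g2 != p) && (h2 != q))) => [h|n2]; first by exists (g2, h2); rewrite // !inE eqxx ?orbT.
    case: (boolP ((g3 != p) && (h3 != q))) => [h|n3]; first by exists (g3, h3); rewrite // !inE eqxx ?orbT.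
    move: n1 n2 n3; rewrite !negb_and !negbK.
    by do 3 (case/orP => /eqP ?); subst; rewrite ?eqxx in g21 g31 g32 h21 h31 h32.
  exists i => //; case/andP: ip => ip iq.
  by rewrite /= /dprod_adj cG // cH.
have := wd _ min1 _ dom2; rewrite cardsX cards1 cardsT mul1n => h.
exact: leq_trans h (card3 _ _ _).
Qed.

Lemma o01 : (o0 == o1) = false. Proof. by []. Qed.
Lemma o10 : (o1 == o0) = false. Proof. by []. Qed.

Definition PQ (H : sgraph) (P Q : {set vertex H}) : {set vertex (dprod_graph (K 2) H)} :=
  setX [set o0] P :|: setX [set o1] Q.

Lemma inPQ (H : sgraph) (P Q : {set vertex H}) i x :
  ((i, x) \in PQ P Q) = ((i == o0) && (x \in P)) || ((i == o1) && (x \in Q)).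
Proof. by rewrite /PQ in_setU !in_setX !in_set1. Qed.

Lemma card_PQ (H : sgraph) (P Q : {set vertex H}) : #|PQ P Q| = #|P| + #|Q|.
Proof.
rewrite /PQ cardsU !cardsX !cards1 !mul1n.
suff -> : setX [set o0] P :&: setX [set o1] Q = set0 by rewrite cards0 subn0.
apply/setP => -[i x]; rewrite !inE /=.
by case: (I2_cases i) => ->; rewrite ?o01 ?o10 ?andbF.
Qed.

Lemma adjK2 (H : sgraph) (i j : 'I_2) (x y : vertex H) :
  @adj (dprod_graph (K 2) H) (i, x) (j, y) = (i != j) && adj x y.
Proof. by []. Qed.

Lemma PQ_dom (H : sgraph) (P Q : {set vertex H}) :
  (forall x, x \in P \/ exists2 w, w \in Q & adj w x) ->
  (forall x, x \in Q \/ exists2 w, w \in P & adj w x) -> dominating (PQ P Q).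
Proof.
move=> h0 h1; apply/domP => -[i x]; case: (I2_cases i) => ->.
  case: (h0 x) => [xP|[w wQ wx]]; first by left; rewrite inPQ xP.
  by right; exists (o1, w); rewrite ?inPQ ?wQ ?orbT // adjK2 wx.
case: (h1 x) => [xQ|[w wP wx]]; first by left; rewrite inPQ xQ orbT.
by right; exists (o0, w); rewrite ?inPQ ?wP // adjK2 wx.
Qed.

Lemma PQ_min (H : sgraph) (P Q : {set vertex H}) :
  (forall x y, x \in P -> y \in Q -> ~~ adj x y) ->
  dominating (PQ P Q) -> minimal_dominating (PQ P Q).
Proof.
move=> ind; apply: indep_min => -[i x] [j y]; rewrite !inPQ adjK2.
case: (I2_cases i) => ->; case: (I2_cases j) => -> //=; rewrite ?andbF ?orbF //=.
  by move=> xP yQ; apply: ind.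
by move=> xQ yP; rewrite adj_sym; apply: ind.
Qed.

Definition C2hyp (H : sgraph) :=
  [/\ connected H, 1 < #|vertex H| & well_dominated (dprod_graph (K 2) H)].

Definition Nb (H : sgraph) (x : vertex H) := [set y | adj x y].

Lemma inNb (H : sgraph) (x y : vertex H) : (y \in Nb x) = adj x y.
Proof. by rewrite inE. Qed.

Lemma W_min (H : sgraph) : C2hyp H -> minimal_dominating (PQ [set: vertex H] set0).
Proof.
case=> cH h2 _; apply: PQ_min; first by move=> x y; rewrite !inE.
apply: PQ_dom => x; first by left; rewrite inE.
by right; have [t xt] := noiso cH h2 x; exists t; rewrite ?inE // adj_sym.
Qed.

Lemma LB (H : sgraph) : C2hyp H -> forall D : {set vertex (dprod_graph (K 2) H)}, dominating D -> #|vertex H| <= #|D|.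
Proof.
move=> hyp D dD; case: (hyp) => _ _ wd.
by have := wd _ (W_min hyp) _ dD; rewrite card_PQ cards0 addn0 cardsT.
Qed.

Lemma UB (H : sgraph) : C2hyp H -> forall D : {set vertex (dprod_graph (K 2) H)}, minimal_dominating D -> #|D| <= #|vertex H|.
Proof.
move=> hyp D mD; case: (hyp) => _ _ wd.
have := wd _ mD _ (proj1 (elimT minP (W_min hyp))).
by rewrite card_PQ cards0 addn0 cardsT.
Qed.

Lemma L1 (H : sgraph) : C2hyp H -> forall (u : vertex H) (S : {set vertex H}), S \subset Nb u ->
  #|S| <= 1 + #|[set z | (z != u) && (Nb z \subset S)]|.
Proof.
move=> hyp u S sS; set Z := [set z | _].
have dD : dominating (PQ (~: S) (u |: Z)).
  apply: PQ_dom => x.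
    case: (boolP (x \in S)) => xS; last by left; rewrite inE xS.
    by right; exists u; rewrite ?setU11 // -inNb (subsetP sS).
  case: (eqVneq x u) => [->|xu]; first by left; rewrite setU11.
  case: (boolP (Nb x \subset S)) => xN.
    by left; rewrite !inE xu xN orbT.
  right; case/subsetPn: xN => w; rewrite inNb => xw wS.
  by exists w; rewrite ?inE // adj_sym.
have := LB hyp dD; rewrite card_PQ.
have := cardsCs S; have := max_card (mem S).
move: #|S| #|~: S| => s cs; rewrite -cardsT.
have := cardsU1 u Z; move=> ->.
case: (u \notin Z) => /=; lia.
Qed.

Lemma L2 (H : sgraph) : C2hyp H -> forall (u : vertex H),
  #|[set z | Nb z \subset Nb u]| <= #|Nb u|.
Proof.
move=> hyp u; set Qu := [set z | _].
have mD : minimal_dominating (PQ (~: Nb u) Qu).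
  apply: PQ_min.
    move=> x y; rewrite !inE => xN yQ; apply: contra xN => xy.
    by rewrite -inNb; apply: (subsetP yQ); rewrite inNb adj_sym.
  apply: PQ_dom => x.
    case: (boolP (x \in Nb u)) => xN; last by left; rewrite inE xN.
    by right; exists u; rewrite ?inE ?subxx // -inNb.
  case: (boolP (x \in Qu)) => xQ; first by left.
  right; move: xQ; rewrite inE => /subsetPn[w]; rewrite inNb => xw wN.
  by exists w; [rewrite in_setC | rewrite adj_sym].
have := UB hyp mD; rewrite card_PQ.
have := cardsCs (Nb u); have := max_card (mem (Nb u)).
move: #|Nb u| #|~: Nb u| #|Qu| => s cs q; rewrite -cardsT; lia.
Qed.

Definition leaf (H : sgraph) (x : vertex H) := #|Nb x| == 1.

Lemma leaf_nb (H : sgraph) (x c : vertex H) : leaf x -> adj x c -> Nb x = [set c].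
Proof.
move=> /cards1P[d e] xc; have : c \in Nb x by rewrite inNb.
by rewrite e inE => /eqP ->.
Qed.

Lemma nb_gt0 (H : sgraph) : C2hyp H -> forall x : vertex H, 0 < #|Nb x|.
Proof.
case=> cH h2 _ x; have [t xt] := noiso cH h2 x.
by apply/card_gt0P; exists t; rewrite inNb.
Qed.

Lemma two_leaves (H : sgraph) : C2hyp H -> forall c t1 t2 : vertex H,
  leaf t1 -> leaf t2 -> adj c t1 -> adj c t2 -> t1 = t2.
Proof.
move=> hyp c t1 t2 l1 l2 c1 c2.
have N1 : Nb t1 = [set c] by apply: leaf_nb; rewrite // adj_sym.
have N2 : Nb t2 = [set c] by apply: leaf_nb; rewrite // adj_sym.
have sub : [set t1; t2] \subset [set z | Nb z \subset Nb t1].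
  by apply/subsetP => z; rewrite !inE => /orP[/eqP->|/eqP->]; rewrite ?subxx // N1 N2.
have := leq_trans (subset_leq_card sub) (L2 hyp t1).
by rewrite cards2 N1 cards1; case: eqVneq.
Qed.

Definition bad (H : sgraph) (x : vertex H) :=
  ~~ leaf x && [forall y, adj x y ==> ~~ leaf y].

Lemma bad_step (H : sgraph) : C2hyp H -> forall x v : vertex H,
  bad x -> adj x v -> bad v.
Proof.
move=> hyp x v /andP[nlx /forallP hx] xv.
apply/andP; split; first exact: (implyP (hx v) xv).
apply/forallP => t; apply/implyP => vt; apply/negP => lt.
have tx : x != t by apply: contraNneq nlx => ->.
have Nt : Nb t = [set v] by apply: leaf_nb; rewrite // adj_sym.
have sS : [set x; t] \subset Nb v.
  by apply/subsetP => y; rewrite !inE => /orP[/eqP->|/eqP->]; rewrite ?vt // adj_sym.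
have := L1 hyp sS; rewrite cards2 tx add1n ltnS => /card_gt0P[z].
rewrite inE => /andP[zv Nz].
have tz : t \notin Nb z.
  rewrite inNb; apply: contra zv => zt.
  by move: zt; rewrite adj_sym -inNb Nt inE.
have Nz1 : Nb z = [set x].
  apply/eqP; rewrite eqEcard cards1 nb_gt0 // andbT.
  apply/subsetP => y yN; move: (subsetP Nz y yN); rewrite !inE => /orP[//|/eqP ey].
  by rewrite -ey yN in tz.
have lz : leaf z by rewrite /leaf Nz1 cards1.
have xz : adj x z by rewrite adj_sym -inNb Nz1 set11.
by move: (implyP (hx z) xz); rewrite lz.
Qed.

Lemma all_bad (H : sgraph) : C2hyp H -> forall x : vertex H, bad x -> forall y : vertex H, bad y.
Proof.
move=> hyp x bx y; case: (hyp) => cH _ _.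
have := @conn_closed H [set z | bad z] x cH (ltac:(by rewrite inE)).
move=> h; have := h _ y; rewrite inE; apply.
by move=> u w; rewrite !inE => bu uw; apply: bad_step bu uw.
Qed.

Lemma pair_nb (H : sgraph) : C2hyp H -> (forall x : vertex H, bad x) ->
  forall u v w : vertex H, adj u v -> adj u w -> v != w ->
  exists y, y != u /\ Nb y = [set v; w].
Proof.
move=> hyp ab u v w uv uw vw.
have sS : [set v; w] \subset Nb u.
  by apply/subsetP => y; rewrite !inE => /orP[/eqP->|/eqP->].
have := L1 hyp sS; rewrite cards2 vw add1n ltnS => /card_gt0P[z].
rewrite inE => /andP[zu Nz]; exists z; split => //.
apply/eqP; rewrite eqEcard Nz /= cards2 vw.
have := nb_gt0 hyp z; have := ab z; case/andP => nl _.
by move: nl; rewrite /leaf; case: #|Nb z| => [|[|n]].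
Qed.

Lemma arith3 n z : 3 + z <= 1 + n -> n <= 1 + z -> False.
Proof. lia. Qed.

Lemma deg2 (H : sgraph) : C2hyp H -> (forall x : vertex H, bad x) ->
  forall u : vertex H, exists v w, v != w /\ Nb u = [set v; w].
Proof.
move=> hyp ab u.
have n2 : 1 < #|Nb u|.
  have := nb_gt0 hyp u; have := ab u; case/andP => nl _.
  by move: nl; rewrite /leaf; case: #|Nb u| => [|[|n]].
have [v vN] : exists v, v \in Nb u by apply/card_gt0P; apply: ltnW.
have [w wN] : exists w, w \in Nb u :\ v.
  by apply/card_gt0P; move: n2; rewrite (cardsD1 v) vN.
move: (wN); rewrite !inE => /andP[wv uw]; rewrite inNb in vN.
exists v, w; split; first by rewrite eq_sym.
apply/eqP; rewrite eqEsubset andbC; apply/andP; split.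
  by apply/subsetP => y; rewrite !inE => /orP[/eqP->|/eqP->].
apply/subsetP => t; rewrite inNb => ut; apply: contraT; rewrite !inE negb_or.
case/andP => tv tw.
have [y1 [y1u N1]] := pair_nb hyp ab vN uw (ltac:(by rewrite eq_sym)).
have [y2 [y2u N2]] := pair_nb hyp ab vN ut (ltac:(by rewrite eq_sym)).
pose Z := [set z | (z != u) && (Nb z \subset Nb u :\ v)].
have hZ := L1 hyp (subD1set (Nb u) v).
rewrite -/Z in hZ.
have y2Z : y2 \notin Z by rewrite inE N2 negb_and; apply/orP; right;
  apply/subsetPn; exists v; rewrite !inE ?eqxx.
have y1Z : y1 \notin y2 |: Z.
  rewrite !inE negb_or; apply/andP; split.
    apply/eqP => e; have : t \in Nb y1 by rewrite e N2 !inE eqxx orbT.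
    by rewrite N1 !inE (negbTE tv) (negbTE tw).
  rewrite negb_and N1; apply/orP; right; apply/subsetPn; exists v; rewrite !inE ?eqxx //.
have uZ : u \notin y1 |: (y2 |: Z).
  by rewrite !inE !negb_or eqxx /= (eq_sym u y1) y1u (eq_sym u y2) y2u.
have sU : u |: (y1 |: (y2 |: Z)) \subset [set z | Nb z \subset Nb u].
  apply/subsetP => z; rewrite !inE => /orP[/eqP->|/orP[/eqP->|/orP[/eqP->|/andP[_ zN]]]].
  - by rewrite subxx.
  - by rewrite N1; apply/subsetP => q; rewrite !inE => /orP[/eqP->|/eqP->].
  - by rewrite N2; apply/subsetP => q; rewrite !inE => /orP[/eqP->|/eqP->].
  - by apply: subset_trans zN (subD1set _ _).
have := leq_trans (subset_leq_card sU) (L2 hyp u).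
rewrite cardsU1 uZ cardsU1 y1Z cardsU1 y2Z /= => h.
have e : #|Nb u| = 1 + #|Nb u :\ v| by rewrite (cardsD1 v (Nb u)) inNb vN.
by rewrite e in h; case: (arith3 h hZ).
Qed.

Lemma sub2_eq (T : finType) (A : {set T}) a b c d :
  A = [set a; b] -> a != b -> c \in A -> d \in A -> c != d -> A = [set c; d].
Proof.
move=> eA ab cA dA cd; apply/eqP; rewrite eq_sym eqEcard; apply/andP; split.
  by apply/subsetP => x; rewrite !inE => /orP[/eqP->|/eqP->].
by rewrite eA !cards2 ab cd.
Qed.

Lemma card4 (T : finType) (a b c d : T) : #|[set a; b; c; d]| <= 4.
Proof.
have -> : [set a; b; c; d] = a |: (b |: (c |: [set d])).
  by apply/setP => x; rewrite !inE !orbA.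
rewrite !cardsU1 cards1.
by case: (_ \notin _); case: (_ \notin _); case: (_ \notin _).
Qed.

Lemma iso_C4 (H : sgraph) : C2hyp H -> (forall x : vertex H, bad x) ->
  isomorphic C4 H.
Proof.
move=> hyp ab; case: (hyp) => cH h2 _.
have [u0 _] : exists u0 : vertex H, u0 \notin set0.
  by apply: exists_other; rewrite cards0 (leq_trans _ h2).
have [v [w [vw Nu]]] := deg2 hyp ab u0.
have uv : adj u0 v by rewrite -inNb Nu !inE eqxx.
have uw : adj u0 w by rewrite -inNb Nu !inE eqxx orbT.
have [y [yu Ny]] := pair_nb hyp ab uv uw vw.
have vy : adj v y by rewrite adj_sym -inNb Ny !inE eqxx.
have wy : adj w y by rewrite adj_sym -inNb Ny !inE eqxx orbT.
have [a [b [ab' Nv0]]] := deg2 hyp ab v.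
have Nv : Nb v = [set u0; y].
  by apply: (sub2_eq Nv0 ab'); [rewrite inNb adj_sym | rewrite inNb | rewrite eq_sym].
have [a2 [b2 [ab2 Nw0]]] := deg2 hyp ab w.
have Nw : Nb w = [set u0; y].
  by apply: (sub2_eq Nw0 ab2); [rewrite inNb adj_sym | rewrite inNb | rewrite eq_sym].
have neq : forall p q : vertex H, adj p q -> (p == q) = false.
  by move=> p q pq; apply/eqP => e; move: pq; rewrite e adj_irr.
have d1 := neq _ _ uv; have d2 := neq _ _ uw; have d3 := neq _ _ vy; have d4 := neq _ _ wy.
have d5 : (v == w) = false by apply/negbTE.
have d6 : (y == u0) = false by apply/negbTE.
have d1' : (v == u0) = false by rewrite eq_sym.
have d2' : (w == u0) = false by rewrite eq_sym.
have d3' : (y == v) = false by rewrite eq_sym.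
have d4' : (y == w) = false by rewrite eq_sym.
have d5' : (w == v) = false by rewrite eq_sym.
have d6' : (u0 == y) = false by rewrite eq_sym.
pose f (i : 'I_4) : vertex H :=
  match nat_of_ord i with 0 => u0 | 1 => v | 2 => y | _ => w end.
have fadj : forall i j, adj (f i) (f j) = @C_adj 4 i j.
  move=> i j; rewrite -inNb.
  case: i => [[|[|[|[|i]]]] Hi] //; case: j => [[|[|[|[|j]]]] Hj] //=;
  rewrite ?Nu ?Nv ?Ny ?Nw !inE ?eqxx ?d1 ?d2 ?d3 ?d4 ?d5 ?d6 ?d1' ?d2' ?d3' ?d4' ?d5' ?d6' //.
exists f; split => //.
apply: inj_card_bij.
  move=> i j.
  case: i => [[|[|[|[|i]]]] Hi] //; case: j => [[|[|[|[|j]]]] Hj] //= e;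
  by [apply/val_inj | move/eqP: e; rewrite ?eqxx ?d1 ?d2 ?d3 ?d4 ?d5 ?d6 ?d1' ?d2' ?d3' ?d4' ?d5' ?d6'].
rewrite card_ord; apply: leq_trans (card4 u0 v y w).
rewrite -cardsT; apply: subset_leq_card; apply/subsetP => z _.
have S0 : u0 \in [set u0; v; y; w] by rewrite !inE eqxx.
apply: (@conn_closed H _ u0 cH S0) => p q pS pq.
have qN : q \in Nb p by rewrite inNb.
have hp : [\/ p = u0, p = v, p = y | p = w].
  by move: pS; rewrite !inE -!orbA => /or4P[]/eqP->; [apply: Or41|apply: Or42|apply: Or43|apply: Or44].
by move: qN; case: hp => ->; rewrite ?Nu ?Nv ?Ny ?Nw !inE => /orP[]/eqP->;
  rewrite eqxx ?orbT.
Qed.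

Definition ind_adj (H : sgraph) (P : pred (vertex H)) : rel {x : vertex H | P x} :=
  fun a b => adj (val a) (val b).
Lemma ind_sym (H : sgraph) (P : pred (vertex H)) : symmetric (@ind_adj H P).
Proof. by move=> a b; rewrite /ind_adj adj_sym. Qed.
Lemma ind_irr (H : sgraph) (P : pred (vertex H)) : irreflexive (@ind_adj H P).
Proof. by move=> a; rewrite /ind_adj adj_irr. Qed.
Definition induced (H : sgraph) (P : pred (vertex H)) : sgraph :=
  SGraph (@ind_sym H P) (@ind_irr H P).

Definition pp (H : sgraph) (x : vertex H) :=
  odflt x [pick y | adj x y && (leaf x || leaf y)].
Definition core (H : sgraph) (x : vertex H) :=
  ~~ leaf x || (leaf (pp x) && (enum_rank x < enum_rank (pp x))).

Lemma corona_case (H : sgraph) : C2hyp H -> (forall x : vertex H, ~~ bad x) ->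
  exists F : sgraph, 0 < gorder F /\ connected F /\ isomorphic (corona F) H.
Proof.
move=> hyp nb; case: (hyp) => cH h2 _.
have pp_spec : forall x : vertex H, adj x (pp x) && (leaf x || leaf (pp x)).
  move=> x; rewrite /pp; case: pickP => [y //|none]; exfalso.
  case lx: (leaf x).
    by have [t xt] := noiso cH h2 x; move: (none t); rewrite xt lx.
  have := nb x; rewrite /bad lx /= => /forallPn[y]; rewrite negb_imply negbK.
  by case/andP => xy ly; move: (none y); rewrite xy ly orbT.
have pp_uniq : forall x y : vertex H, adj x y -> leaf x || leaf y -> y = pp x.
  move=> x y xy lxy; have /andP[xp lp] := pp_spec x.
  case lx: (leaf x).
    by apply/set1_inj; rewrite -(leaf_nb lx xy) -(leaf_nb lx xp).
  rewrite lx /= in lxy lp.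
  exact: (two_leaves hyp lxy lp xy xp).
have pp_inv : forall x : vertex H, pp (pp x) = x.
  move=> x; have /andP[xp lp] := pp_spec x.
  by symmetry; apply: pp_uniq; [rewrite adj_sym | rewrite orbC].
have pp_neq : forall x : vertex H, pp x != x.
  by move=> x; apply/eqP => e; have /andP[] := pp_spec x; rewrite e adj_irr.
have core_pp : forall x : vertex H, core (pp x) = ~~ core x.
  move=> x; rewrite /core pp_inv; have /andP[_ l] := pp_spec x.
  case lx: (leaf x); last first.
    have lp : leaf (pp x) by rewrite lx in l.
    by rewrite lp.
  case lq : (leaf (pp x)); rewrite /= ?lx ?lq //.
  rewrite ltn_neqAle -leqNgt.
  have ne : (nat_of_ord (enum_rank (pp x)) == enum_rank x) = false.
    apply/negbTE/negP => /eqP e; have := pp_neq x.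
    rewrite -(inj_eq enum_rank_inj) (_ : enum_rank (pp x) = enum_rank x) ?eqxx //.
    by apply: val_inj.
  by rewrite ne.
have pp_leaf : forall x : vertex H, core x -> leaf (pp x).
  move=> x; have /andP[_ l] := pp_spec x; rewrite /core.
  by case lx: (leaf x) l => //= _ /andP[].
have Nb_pp : forall x : vertex H, core x -> Nb (pp x) = [set x].
  by move=> x cx; apply: leaf_nb (pp_leaf x cx) _; rewrite adj_sym; case/andP: (pp_spec x).
pose F := induced (@core H).
pose phi (z : vertex (corona F)) : vertex H :=
  match z with inl a => val a | inr a => pp (val a) end.
have core_r : forall x : vertex H, core (if core x then x else pp x).
  by move=> x; case cx: (core x) => //; rewrite core_pp cx.
pose rr (x : vertex H) : vertex F := exist _ (if core x then x else pp x) (core_r x).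
exists F; split.
  have [x0 _] : exists x0 : vertex H, x0 \notin set0.
    by apply: exists_other; rewrite cards0 (leq_trans _ h2).
  by apply/card_gt0P; exists (rr x0).
split.
  move=> a b.
  have step : forall x y : vertex H, adj x y -> connect (@adj F) (rr x) (rr y).
    move=> x y xy.
    suff : (if core x then x else pp x) = (if core y then y else pp y) \/
           adj (if core x then x else pp x) (if core y then y else pp y).
      case=> [e|e]; last by apply: connect1.
      by have -> : rr x = rr y by apply: val_inj.
    case cx: (core x); case cy: (core y).
    - by right.
    - left; have := Nb_pp (pp y); rewrite pp_inv core_pp cy => /(_ isT) Ny.
      by apply/eqP; rewrite -in_set1 -Ny inNb adj_sym.
    - left; have := Nb_pp (pp x); rewrite pp_inv core_pp cx => /(_ isT) Nx.
      by apply/eqP; rewrite eq_sym -in_set1 -Nx inNb.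
    - have := Nb_pp (pp x); rewrite pp_inv core_pp cx => /(_ isT) Nx.
      have : y \in Nb x by rewrite inNb.
      by rewrite Nx inE => /eqP e; move: cy; rewrite e core_pp cx.
  have rrv : forall c : vertex F, rr (val c) = c.
    by move=> c; apply: val_inj; rewrite /= (valP c).
  rewrite -(rrv a) -(rrv b).
  case/connectP: (cH (val a) (val b)) => s pth ->.
  elim: s (val a) pth => [|z s IH] x /=; first by move=> _; apply: connect0.
  case/andP => xz pth; exact: connect_trans (step _ _ xz) (IH _ pth).
have phi_adj : forall z1 z2, adj (phi z1) (phi z2) = corona_adj z1 z2.
  case=> [a|a] [b|b] /=.
  - by [].
  - by rewrite adj_sym -inNb Nb_pp ?(valP b) // inE val_eqE.
  - by rewrite -inNb Nb_pp ?(valP a) // inE eq_sym val_eqE.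
  - rewrite -inNb Nb_pp ?(valP a) // inE; apply/negbTE/eqP => e.
    by have := core_pp (val b); rewrite e (valP a) (valP b).
exists phi; split => //.
apply: inj_card_bij.
  case=> [a|a] [b|b] /= e.
  - by congr inl; apply: val_inj.
  - by have := core_pp (val b); rewrite -e (valP a) (valP b).
  - by have := core_pp (val a); rewrite e (valP a) (valP b).
  - by congr inr; apply: val_inj; rewrite -(pp_inv (val a)) e pp_inv.
apply: (@leq_trans #|phi @: [set: vertex (corona F)]|); last first.
  by apply: leq_trans (leq_imset_card _ _) _; rewrite cardsT.
rewrite -cardsT; apply: subset_leq_card; apply/subsetP => x _; apply/imsetP.
case cx: (core x).
  by exists (inl (exist _ x cx)).
have cpx : core (pp x) by rewrite core_pp cx.
by exists (inr (exist _ (pp x) cpx)); rewrite //= pp_inv.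
Qed.

Lemma C2 (H : sgraph) : connected H -> 1 < #|vertex H| ->
  well_dominated (dprod_graph (K 2) H) ->
  isomorphic C4 H \/
  exists F : sgraph, 0 < gorder F /\ connected F /\ isomorphic (corona F) H.
Proof.
move=> cH h2 wd; have hyp : C2hyp H by split.
case: (boolP [exists x : vertex H, bad x]) => [/existsP[x bx] | /existsPn nb].
  by left; apply: iso_C4 hyp (all_bad hyp bx).
by right; apply: corona_case hyp nb.
Qed.

Theorem theorem2 (G H : sgraph) :
  1 < gorder G -> 1 < gorder H -> connected G -> connected H ->
  well_dominated (dprod_graph G H) <->
  (isomorphic (dprod_graph G H) (dprod_graph (K 3) (K 3)) \/
   isomorphic (dprod_graph G H) (dprod_graph (K 2) C4) \/
   exists F : sgraph, 0 < gorder F /\ connected F /\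
     isomorphic (dprod_graph G H) (dprod_graph (K 2) (corona F))).
Proof.
rewrite /gorder => nG nH cG cH; split; last first.
  case=> [i|[i|[F [_ [_ i]]]]]; apply: (wd_iso (iso_sym i)).
  - exact: wd_K3K3.
  - exact: wd_K2C4.
  - exact: wd_corona.
move=> wd.
have wd' : well_dominated (dprod_graph H G) := wd_iso (iso_swap G H) wd.
have K2case : forall X Y : sgraph, connected X -> connected Y -> 1 < #|vertex Y| ->
    #|vertex X| = 2 -> well_dominated (dprod_graph X Y) ->
    isomorphic (dprod_graph X Y) (dprod_graph (K 2) C4) \/
    exists F : sgraph, 0 < gorder F /\ connected F /\
      isomorphic (dprod_graph X Y) (dprod_graph (K 2) (corona F)).
  move=> X Y cX cY nY eX wdXY.
  have iX : isomorphic (K 2) X := complete_iso eX (two_complete cX eX).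
  have wdK : well_dominated (dprod_graph (K 2) Y) :=
    wd_iso (iso_prod (iso_sym iX) (iso_refl Y)) wdXY.
  case: (C2 cY nY wdK) => [iC|[F [F0 [cF iF]]]].
    by left; apply: iso_prod (iso_sym iX) (iso_sym iC).
  right; exists F; split => //; split => //.
  exact: iso_prod (iso_sym iX) (iso_sym iF).
case: (eqVneq #|vertex G| 2) => [eG|nG2].
  by right; apply: K2case.
case: (eqVneq #|vertex H| 2) => [eH|nH2].
  right; case: (K2case H G cH cG nG eH wd') => [i|[F [F0 [cF i]]]].
    by left; apply: iso_trans (iso_swap G H) i.
  right; exists F; split => //; split => //.
  exact: iso_trans (iso_swap G H) i.
left.
have nG3 : 2 < #|vertex G| by rewrite ltn_neqAle eq_sym nG2 nG.
have nH3 : 2 < #|vertex H| by rewrite ltn_neqAle eq_sym nH2 nH.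
have compG : forall a b : vertex G, a != b -> adj a b.
  have [v gv] := good_vertex cH nH3.
  have [t vt] := noiso cH nH v.
  refine (clique_complete cG _).
  have tv : adj t v by rewrite adj_sym.
  exact: (nb_clique wd gv tv (noiso cG nG)).
have compH : forall a b : vertex H, a != b -> adj a b.
  have [v gv] := good_vertex cG nG3.
  have [t vt] := noiso cG nG v.
  refine (clique_complete cH _).
  have tv : adj t v by rewrite adj_sym.
  exact: (nb_clique wd' gv tv (noiso cH nH)).
have hG : #|vertex H| <= 3 := complete_bound wd compG compH nG3 nH3.
have hH : #|vertex G| <= 3 := complete_bound wd' compH compG nH3 nG3.
have eG : #|vertex G| = 3 by apply/eqP; rewrite eqn_leq hH nG3.
have eH : #|vertex H| = 3 by apply/eqP; rewrite eqn_leq hG nH3.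
by apply: iso_prod; apply: iso_sym; apply: complete_iso.
Qed.
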